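(* Let $(G,\cdot)$ be a finite group and $\psi\in\operatorname{End}(G,\cdot)$ with $\psi([[G,\psi],G])\le Z(G,\cdot)$. Let $\nu(g)\in\operatorname{Perm}(G)$ be $h\mapsto g\,\psi(g)^{-1}h\,\psi(g)$ and $N=\{\nu(g):g\in G\}$. Let $G_0=\ker\psi$ and $G_1=\{g\in G:\psi(g)=g\}$, and $N_0=\nu(G_0)$, $N_1=\nu(G_1)$. Then: (1) $N_0=\lambda(G_0)$, it is a normal subgroup of $N$ isomorphic to $(G_0,\cdot)$, and it is normalised by $\lambda(G)$; (2) $N_1=\rho(G_1)$, it is a subgroup of $N$ isomorphic to $(G_1,\cdot)$, and $\lambda(G)$ centralises it; (3) $N_{01}=N_0N_1=\nu(G_0\cdot G_1)$ is a subgroup of $N$, it is the internal direct product of $N_0$ and $N_1$ (so isomorphic to $(G_0,\cdot)\times(G_1,\cdot)$), and it is normalised by $\lambda(G)$; (4) $\lambda(G)\cap N=\{\lambda(g):\psi(g)\in Z(G,\cdot)\}$ and $\rho(G)\cap N=\{\rho(g):g\,\psi(g)^{-1}\in Z(G,\cdot)\}$, and both are subgroups of $N$ normalised by $\lambda(G)$, with $\lambda(G)$ centralising $\rho(G)\cap N$.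
   Context: $\operatorname{Perm}(G)$ is the group of permutations of the set $G$; $\lambda(g)(h)=g\cdot h$ and $\rho(g)(h)=h\cdot g^{-1}$ are the left and right regular representations. For $\psi\in\operatorname{End}(G,\cdot)$, $[g,\psi]=g\cdot\psi(g)^{-1}$ and $[G,\psi]$ is the subgroup generated by these elements; $[x,y]=xyx^{-1}y^{-1}$ and $[A,B]$ is the subgroup generated by $[a,b]$, $a\in A,b\in B$; $Z(G,\cdot)$ is the centre. Under the hypothesis, $N$ is a regular subgroup of $\operatorname{Perm}(G)$ normalised by $\lambda(G)$. *)

(* Defs.v *)
From HB Require Import structures.
From mathcomp Require Import all_boot all_fingroup all_solvable.
Set Implicit Arguments. Unset Strict Implicit. Unset Printing Implicit Defensive.
Local Open Scope group_scope.

Section Regular.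
Variable gT : finGroupType.

Definition lam (g : gT) : {perm gT} := perm (mulgI g).

Definition rho (g : gT) : {perm gT} := perm (@mulIg _ g^-1).

(* paper's commutator [x,y] = x y x^-1 y^-1 *)
Definition pcomm (x y : gT) : gT := x * y * x^-1 * y^-1.

Definition pcommg (A B : {set gT}) : {set gT} :=
  <<[set pcomm a b | a in A, b in B]>>.

Definition pcommE (psi : gT -> gT) (g : gT) : gT := g * (psi g)^-1.

Definition commE (psi : gT -> gT) (G : {set gT}) : {set gT} :=
  <<[set pcommE psi g | g in G]>>.

Lemma nu_inj (psi : gT -> gT) (g : gT) :
  injective (fun h : gT => g * (psi g)^-1 * h * psi g).
Proof. by move=> x y /mulIg /mulgI. Qed.

Definition nu (psi : gT -> gT) (g : gT) : {perm gT} := perm (@nu_inj psi g).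

End Regular.

(* Main.v *)
Require Import Defs.
From mathcomp Require Import all_boot all_fingroup all_solvable.
Set Implicit Arguments. Unset Strict Implicit. Unset Printing Implicit Defensive.
Local Open Scope group_scope.

Section Help.
Variable gT : finGroupType.
Implicit Types a b g h x : gT.

Lemma lamE g h : lam g h = g * h. Proof. by rewrite permE. Qed.
Lemma rhoE g h : rho g h = h * g^-1. Proof. by rewrite permE. Qed.
Lemma nuE (psi : gT -> gT) g h : nu psi g h = g * (psi g)^-1 * h * psi g.
Proof. by rewrite permE. Qed.

Lemma lamM a b : lam a * lam b = lam (b * a).
Proof. by apply/permP => h; rewrite permM !lamE mulgA. Qed.
Lemma rhoM a b : rho a * rho b = rho (b * a).
Proof. by apply/permP => h; rewrite permM !rhoE invMg mulgA. Qed.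
Lemma lam1 : lam (1 : gT) = 1.
Proof. by apply/permP => h; rewrite lamE perm1 mul1g. Qed.
Lemma rho1 : rho (1 : gT) = 1.
Proof. by apply/permP => h; rewrite rhoE perm1 invg1 mulg1. Qed.
Lemma lam_inj : injective (@lam gT).
Proof. by move=> a b /permP/(_ 1); rewrite !lamE !mulg1. Qed.
Lemma rho_inj : injective (@rho gT).
Proof. by move=> a b /permP/(_ 1); rewrite !rhoE !mul1g => /invg_inj. Qed.
Lemma lam_rho_comm a b : commute (lam a) (rho b).
Proof. by apply/permP => h; rewrite !permM !lamE !rhoE mulgA. Qed.

Lemma inZ x : reflect (forall h, commute x h) (x \in 'Z([set: gT])).
Proof.
apply: (iffP (centerP _ _)) => [[_ H] h|H]; first exact: H (in_setT h).
by split; [exact: in_setT | move=> h _; exact: H].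
Qed.

Lemma group_lam (H : {group gT}) : group_set (@lam gT @: H).
Proof.
apply/group_setP; split; first by apply/imsetP; exists 1; rewrite ?lam1.
move=> _ _ /imsetP[a Ha ->] /imsetP[b Hb ->]; rewrite lamM.
by apply/imsetP; exists (b * a); rewrite ?groupM.
Qed.
Lemma group_rho (H : {group gT}) : group_set (@rho gT @: H).
Proof.
apply/group_setP; split; first by apply/imsetP; exists 1; rewrite ?rho1.
move=> _ _ /imsetP[a Ha ->] /imsetP[b Hb ->]; rewrite rhoM.
by apply/imsetP; exists (b * a); rewrite ?groupM.
Qed.

Lemma imsetV (T : finType) (f : gT -> T) (H : {group gT}) :
  [set f g^-1 | g in H] = [set f g | g in H].
Proof.
apply/setP => x; apply/imsetP/imsetP => -[g Hg ->].
  by exists g^-1; rewrite ?groupV.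
by exists g^-1; rewrite ?groupV ?invgK.
Qed.

Lemma lamV_morphM : {in [set: gT] &, {morph (fun g => lam g^-1) : x y / x * y}}.
Proof. by move=> x y _ _ /=; rewrite lamM invMg. Qed.
Canonical lamV_morph := Morphism lamV_morphM.
Lemma rhoV_morphM : {in [set: gT] &, {morph (fun g => rho g^-1) : x y / x * y}}.
Proof. by move=> x y _ _ /=; rewrite rhoM invMg. Qed.
Canonical rhoV_morph := Morphism rhoV_morphM.

Lemma lamV_im (H : {group gT}) : lamV_morph @* H = @lam gT @: H.
Proof. by rewrite morphimE setTI imsetV. Qed.
Lemma rhoV_im (H : {group gT}) : rhoV_morph @* H = @rho gT @: H.
Proof. by rewrite morphimE setTI imsetV. Qed.
Lemma lamV_injm : 'injm lamV_morph.
Proof. by apply/injmP => x y _ _ /= /lam_inj /invg_inj. Qed.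
Lemma rhoV_injm : 'injm rhoV_morph.
Proof. by apply/injmP => x y _ _ /= /rho_inj /invg_inj. Qed.

Lemma isog_lam (H : {group gT}) : isog (@lam gT @: H) H.
Proof.
by rewrite -lamV_im isog_sym; apply: sub_isog (subsetT _) lamV_injm.
Qed.
Lemma isog_rho (H : {group gT}) : isog (@rho gT @: H) H.
Proof.
by rewrite -rhoV_im isog_sym; apply: sub_isog (subsetT _) rhoV_injm.
Qed.

End Help.

Section Main.
Variable gT : finGroupType.
Variable psi : {morphism [set: gT] >-> gT}.
Implicit Types a b g h x : gT.

Lemma psiM a b : psi (a * b) = psi a * psi b.
Proof. by rewrite morphM ?in_setT. Qed.
Lemma psiV a : psi a^-1 = (psi a)^-1.
Proof. by rewrite morphV ?in_setT. Qed.

Lemma nuker g : g \in 'ker psi -> nu psi g = lam g.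
Proof. by move=> /mker Hg; apply/permP => h; rewrite nuE lamE Hg invg1 !mulg1. Qed.
Lemma nufix g : psi g = g -> nu psi g = rho g^-1.
Proof. by move=> Hg; apply/permP => h; rewrite nuE rhoE Hg mulgV mul1g invgK. Qed.

Lemma G1_group_set : group_set [set g | psi g == g].
Proof.
apply/group_setP; split; first by rewrite inE morph1.
by move=> x y; rewrite !inE psiM => /eqP-> /eqP->.
Qed.
Definition G1g := Group G1_group_set.

Lemma N0E : [set nu psi g | g in 'ker psi] = @lam gT @: 'ker psi.
Proof. by apply: eq_in_imset => g; apply: nuker. Qed.
Lemma N1E : [set nu psi g | g in [set g | psi g == g]] = @rho gT @: [set g | psi g == g].
Proof.
rewrite -(imsetV _ G1g) /=; apply: eq_in_imset => g; rewrite inE => /eqP.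
by move=> H; rewrite nufix ?invgK // psiV H.
Qed.


Lemma N_norm_N0 : [set nu psi g | g in [set: gT]] \subset 'N(@lam gT @: 'ker psi).
Proof.
apply/subsetP => _ /imsetP[g _ ->]; rewrite inE; apply/subsetP.
move=> _ /imsetP[_ /imsetP[k Hk ->] ->].
apply/imsetP; exists (k ^ (g * (psi g)^-1)^-1).
  by rewrite memJ_norm // (subsetP (ker_norm psi)) ?in_setT.
rewrite /conjg; apply: (mulgI (nu psi g)); rewrite !mulgA mulgV mul1g.
apply/permP => h; rewrite !permM !lamE !nuE invgK !mulgA.
by rewrite -(mulgA _ _ g) -(mulgA _ _ (psi g)^-1) -(mulgA _ g) mulVg mulg1.
Qed.

Definition lamG (H : {group gT}) := Group (group_lam H).
Definition rhoG (H : {group gT}) := Group (group_rho H).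

Lemma L_norm_lam (H : {group gT}) :
  [set: gT] \subset 'N(H) -> @lam gT @: [set: gT] \subset 'N(@lam gT @: H).
Proof. by move=> nH; rewrite -!lamV_im; apply: morphim_norms. Qed.

Lemma L_cent_rho (S : {set gT}) : @lam gT @: [set: gT] \subset 'C(@rho gT @: S).
Proof.
apply/centsP => _ /imsetP[a _ ->] _ /imsetP[b _ ->]; exact: lam_rho_comm.
Qed.

Lemma rho_cent_lam (S T : {set gT}) : @rho gT @: S \subset 'C(@lam gT @: T).
Proof.
apply/centsP => _ /imsetP[a _ ->] _ /imsetP[b _ ->].
exact/commute_sym/lam_rho_comm.
Qed.

Lemma nuMab a b : a \in 'ker psi -> psi b = b -> nu psi (a * b) = nu psi a * nu psi b.
Proof.
move=> Ha Hb; rewrite (nuker Ha) (nufix Hb); apply/permP => h.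
by rewrite permM nuE lamE rhoE invgK psiM (mker Ha) mul1g Hb mulgK.
Qed.

Lemma N01E :
  [set nu psi g | g in 'ker psi] * [set nu psi g | g in [set g | psi g == g]]
  = [set nu psi g | g in 'ker psi * [set g | psi g == g]].
Proof.
apply/setP => x; apply/mulsgP/imsetP.
  case=> _ _ /imsetP[a Ha ->] /imsetP[b Hb ->] ->; exists (a * b).
    exact: mem_mulg.
  by rewrite nuMab //; move: Hb; rewrite inE => /eqP.
case=> _ /mulsgP[a b Ha Hb ->] ->; exists (nu psi a) (nu psi b); rewrite ?imset_f //.
by rewrite nuMab //; move: Hb; rewrite inE => /eqP.
Qed.

Lemma N01_triv : (@lam gT @: 'ker psi) :&: (@rho gT @: [set g | psi g == g]) = 1.
Proof.
apply/eqP; rewrite eqEsubset; apply/andP; split; last first.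
  rewrite sub1set inE; apply/andP; split; apply/imsetP; exists 1;
    rewrite ?lam1 ?rho1 ?group1 //.
  by rewrite inE morph1.
apply/subsetP => _ /setIP[/imsetP[a Ha ->] /imsetP[b Hb Heq]].
have Eab : a = b^-1 by move/permP: Heq => /(_ 1); rewrite lamE rhoE mulg1 mul1g.
have : psi a = a by rewrite Eab psiV; move: Hb; rewrite inE => /eqP->.
by rewrite (mker Ha) => <-; rewrite lam1 inE.
Qed.

Lemma dprodN : lamG ('ker psi) \x rhoG G1g = lamG ('ker psi) * rhoG G1g.
Proof. by rewrite dprodE //=; [apply: rho_cent_lam | apply: N01_triv]. Qed.

Lemma LN :
  [set lam g | g in [set: gT]] :&: [set nu psi g | g in [set: gT]]
  = [set lam g | g in [set g | psi g \in 'Z([set: gT])]].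
Proof.
apply/setP => x; rewrite inE; apply/andP/imsetP.
  case=> /imsetP[a _ ->] /imsetP[g _ Heq]; exists a => //; rewrite in_set.
  have Ea : a = g by move/permP: Heq => /(_ 1); rewrite lamE nuE !mulg1 mulgKV.
  subst a; apply/inZ => h; move/permP: Heq => /(_ h); rewrite lamE nuE.
  rewrite -!mulgA => /mulgI E; rewrite /commute {1}E mulKVg //.
case=> a; rewrite in_set => /inZ Hz ->; split; first by rewrite imset_f.
apply/imsetP; exists a => //; apply/permP => h.
by rewrite lamE nuE -!mulgA -(Hz h) mulKg.
Qed.

Lemma RN :
  [set rho g | g in [set: gT]] :&: [set nu psi g | g in [set: gT]]
  = [set rho g | g in [set g | g * (psi g)^-1 \in 'Z([set: gT])]].
Proof.
apply/setP => x; rewrite inE; apply/andP/imsetP.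
  case=> /imsetP[a _ ->] /imsetP[g _ Heq]; exists a => //; rewrite in_set.
  have Eg : g = a^-1.
    by move/permP: Heq => /(_ 1); rewrite rhoE nuE !mulg1 mulgKV mul1g.
  subst g; set p := psi a.
  have K h : a * h * a^-1 = p * h * p^-1.
    move/permP: Heq => /(_ h); rewrite rhoE nuE psiV invgK -/p => E.
    by rewrite -mulgA E !mulgA mulgV mul1g.
  apply/inZ => h; rewrite /commute.
  suff E : a * p^-1 * h * (a * p^-1)^-1 = h by rewrite -{2}E mulgKV.
  rewrite invMg invgK !mulgA.
  by have := K (p^-1 * h * p); rewrite !mulgA mulgV mul1g mulgK.
case=> a; rewrite in_set => /inZ Hz ->; split; first by rewrite imset_f.
apply/imsetP; exists a^-1 => //; apply/permP => h.
set p := psi a.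
have E1 : p^-1 * a = a * p^-1.
  by have := Hz a; rewrite /commute -/p -!mulgA => /mulgI.
have E2 : a^-1 * p = (a * p^-1)^-1 by rewrite -E1 invMg invgK.
rewrite rhoE nuE psiV invgK -/p E2.
by rewrite (commute_sym (commuteV (commute_sym (Hz h)))) -mulgA -E2 mulgK.
Qed.

Lemma K_group_set : group_set [set g | g * (psi g)^-1 \in 'Z([set: gT])].
Proof.
apply/group_setP; split; first by rewrite in_set morph1 invg1 mulg1 group1.
move=> x y; rewrite in_set => Hx; rewrite in_set => Hy; rewrite in_set.
rewrite psiM invMg mulgA -(mulgA x y) -((inZ _ Hy) x) -mulgA groupM //.
Qed.
Definition Kg := Group K_group_set.

Lemma ZpreE : [set g | psi g \in 'Z([set: gT])] = psi @*^-1 'Z([set: gT]).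
Proof. by apply/setP => g; rewrite morphpreE in_setI in_set in_setT !inE. Qed.

Lemma Zpre_norm : [set: gT] \subset 'N(psi @*^-1 'Z([set: gT])).
Proof.
rewrite -{1}(morphpreT psi); apply: morphpre_norms.
exact: normal_norm (center_normal _).
Qed.

End Main.

Theorem mainTheorem9 (gT : finGroupType) (psi : {morphism [set: gT] >-> gT}) :
  psi @* pcommg (commE psi [set: gT]) [set: gT] \subset 'Z([set: gT]) ->
  let N : {set {perm gT}} := [set nu psi g | g in [set: gT]] in
  let G0 : {set gT} := 'ker psi in
  let G1 : {set gT} := [set g | psi g == g] in
  let N0 : {set {perm gT}} := [set nu psi g | g in G0] in
  let N1 : {set {perm gT}} := [set nu psi g | g in G1] in
  let L : {set {perm gT}} := [set lam g | g in [set: gT]] in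
  [/\ (* (1) *)
      [/\ N0 = [set lam g | g in G0], group_set N0, N0 <| N, isog N0 G0
        & L \subset 'N(N0)],
      (* (2) *)
      [/\ N1 = [set rho g | g in G1], group_set N1, N1 \subset N, isog N1 G1
        & L \subset 'C(N1)],
      (* (3) *)
      [/\ N0 * N1 = [set nu psi g | g in G0 * G1], group_set (N0 * N1) && (N0 * N1 \subset N),
          N0 \x N1 = N0 * N1,
          isog (N0 * N1) (setX G0 G1)
        & L \subset 'N(N0 * N1)]
    & (* (4) *)
      [/\ L :&: N = [set lam g | g in [set g | psi g \in 'Z([set: gT])]],
          [set rho g | g in [set: gT]] :&: N
            = [set rho g | g in [set g | g * (psi g)^-1 \in 'Z([set: gT])]],
          group_set (L :&: N) && (L :&: N \subset N)
            && (L \subset 'N(L :&: N)),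
          group_set ([set rho g | g in [set: gT]] :&: N)
            && ([set rho g | g in [set: gT]] :&: N \subset N)
            && (L \subset 'N([set rho g | g in [set: gT]] :&: N))
        & L \subset 'C([set rho g | g in [set: gT]] :&: N)]].
Proof.
move=> _ N G0 G1 N0 N1 L.
have eN0 : N0 = [set lam g | g in G0] := N0E psi.
have eN1 : N1 = [set rho g | g in G1] := N1E psi.
have LN0 : L \subset 'N(N0) by rewrite eN0; apply: L_norm_lam; exact: ker_norm.
have LN1 : L \subset 'C(N1) by rewrite eN1; apply: L_cent_rho.
have dp : N0 \x N1 = N0 * N1 by rewrite eN0 eN1; exact: dprodN psi.
have gNN : group_set (N0 * N1).
  rewrite eN0 eN1; change (group_set (lamG ('ker psi) * rhoG (G1g psi))).
  apply/comm_group_setP.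
  by apply: centC; rewrite centsC; apply: rho_cent_lam.
have dp' : N0 \x N1 = Group gNN := dp.
split.
- split=> //.
  + by rewrite eN0; exact: group_lam.
  + apply/andP; split; first by apply: imsetS; apply: subsetT.
    rewrite eN0; exact: N_norm_N0.
  + rewrite eN0; exact: isog_lam.
- split=> //.
  + by rewrite eN1; exact: (group_rho (G1g psi)).
  + by apply: imsetS; apply: subsetT.
  + rewrite eN1; exact: (isog_rho (G1g psi)).
- split.
  + exact: N01E.
  + rewrite gNN /=.
    by rewrite N01E; apply: imsetS; apply: subsetT.
  + exact: dp.
  + apply: (isog_dprod dp' (setX_dprod ('ker psi) (G1g psi))).
      rewrite eN0.
      exact: (isog_trans (G := lamG ('ker psi)) (isog_lam _) (isog_setX1 _ _)).
    rewrite eN1.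
    exact: (isog_trans (G := rhoG (G1g psi)) (isog_rho _) (isog_set1X _ _)).
  + by apply: normsM => //; apply: cents_norm.
- split.
  + exact: LN.
  + exact: RN.
  + rewrite subsetIr andbT LN ZpreE group_lam /=.
    by apply: L_norm_lam; apply: Zpre_norm.
  + rewrite subsetIr andbT RN (group_rho (Kg psi)) /=.
    by apply: cents_norm; apply: L_cent_rho.
  + by rewrite RN; apply: L_cent_rho.
Qed.
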